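(* Let $p$ be a prime and let $\Phi:\mathbb{N}\to\mathbb{N}$ be strictly increasing. For every continuous function $f:\mathbb{Z}_p\to\mathbb{Z}_p$ there exists a unique sequence $(B(m))_{m\ge 0}=(B(\Phi,f;m))_{m\ge0}$ of elements of $\mathbb{Z}_p$ such that \[ f(x)=\sum_{m=0}^{\infty} B(\Phi,f;m)\,\chi(\Phi,m;x)\quad\text{for all }x\in\mathbb{Z}_p. \] Moreover this sequence is given by \[ B(\Phi,f;m)=\begin{cases} f(m) & \text{if } m<p^{1+\Phi(0)},\\ f(m)-f(m-M(m)) & \text{otherwise.}\end{cases} \]
   Context: $\mathbb{N}=\{0,1,2,\dots\}$. $v_p$ and $|\cdot|_p$ denote the $p$-adic valuation and absolute value on $\mathbb{Z}_p$, normalized by $v_p(p)=1$, $|p|_p=p^{-1}$. Every $x\in\mathbb{Z}_p$ is written $x=\sum_{i\ge0}x_ip^i$ with digits $x_i\in\{0,\dots,p-1\}$; for a nonnegative integer $m$, $m_i$ denote its base-$p$ digits. Set $\Phi(-1):=-1$. For $m\in\mathbb{N}$ let $\tau(m)=\tau(\Phi;m):=\min\{h\in\mathbb{N}: m<p^{1+\Phi(h)}\}$. For $m\in\mathbb{N}$ and $x\in\mathbb{Z}_p$, $\chi(\Phi,m;x):=1$ if $|x-m|_p\le p^{-1-\Phi(\tau(m))}$ and $\chi(\Phi,m;x):=0$ otherwise. For $m\ge p^{1+\Phi(0)}$ (i.e. $\tau(m)\ge1$), $M(m)=M(\Phi;m):=\sum_{i=\Phi(\tau(m)-1)+1}^{\Phi(\tau(m))}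 m_i p^i$. *)

(* Defs.v *)
(* MathComp. p-adic integers Z_p are modelled as the inverse limit
   of Z/p^n Z: an element is a coherent sequence of residues x_n in
   [0, p^n) (represented in int), with x_n = x_(n+1) mod p^n. *)
From HB Require Import structures.
From mathcomp Require Import all_boot all_order all_algebra.
Set Implicit Arguments. Unset Strict Implicit. Unset Printing Implicit Defensive.
Import Order.TTheory GRing.Theory Num.Theory.
Local Open Scope ring_scope.

Lemma modz_dvdm (d e m : int) : (e %| d)%Z -> ((m %% d)%Z %% e)%Z = (m %% e)%Z.
Proof.
move=> ed; apply/eqP; rewrite eqz_mod_dvd.
have -> : (m %% d)%Z - m = - ((m %/ d)%Z * d).
  by rewrite {2}(divz_eq m d) opprD addrCA subrr addr0.
by rewrite rpredN; apply: dvdz_trans ed (dvdz_mull _ (dvdzz d)).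
Qed.

Lemma dvdz_expS (p : nat) (n : nat) : ((p ^ n)%N%:Z %| (p ^ n.+1)%N%:Z)%Z.
Proof. rewrite dvdzE /= expnS; exact: dvdn_mull. Qed.

Record padic (p : nat) := MkZp {
  zp_res : nat -> int ;
  zp_coh : forall n, zp_res n = (zp_res n.+1 %% (p ^ n)%N%:Z)%Z
}.
Arguments zp_res {p}.

Section ZpOps.
Variable p : nat.

Definition zp_of_nat (m : nat) : padic p.
Proof.
refine (@MkZp p (fun n => (m%:Z %% (p ^ n)%N%:Z)%Z) _).
by move=> n; rewrite modz_dvdm // dvdz_expS.
Defined.

Definition zp_zero : padic p := zp_of_nat 0.

Definition zp_add (x y : padic p) : padic p.
Proof.
refine (@MkZp p (fun n => ((zp_res x n + zp_res y n) %% (p ^ n)%N%:Z)%Z) _).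
move=> n; rewrite modz_dvdm ?dvdz_expS //.
by rewrite (zp_coh x n) (zp_coh y n) modzDm.
Defined.

Definition zp_sub (x y : padic p) : padic p.
Proof.
refine (@MkZp p (fun n => ((zp_res x n - zp_res y n) %% (p ^ n)%N%:Z)%Z) _).
move=> n; rewrite modz_dvdm ?dvdz_expS //.
rewrite (zp_coh x n) (zp_coh y n).
by rewrite modzDml -modzDmr modzNm modzDmr.
Defined.
End ZpOps.

(* |x - y|_p <= p^(-k)  <->  x = y (mod p^k)  <->  the k-th residues agree *)
Definition zp_close (p : nat) (x y : padic p) (k : nat) : Prop :=
  zp_res x k = zp_res y k.

Definition zp_continuous (p : nat) (f : padic p -> padic p) : Prop :=
  forall (x : padic p) (k : nat), exists l : nat,
    forall y : padic p, zp_close y x l -> zp_close (f y) (f x) k.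

Fixpoint zp_psum (p : nat) (a : nat -> padic p) (N : nat) : padic p :=
  match N with
  | 0 => zp_zero p
  | N'.+1 => zp_add (zp_psum a N') (a N')
  end.

Definition zp_series_conv (p : nat) (a : nat -> padic p) (s : padic p) : Prop :=
  forall k : nat, exists N0 : nat, forall N : nat, (N0 <= N)%N ->
    zp_close (zp_psum a N) s k.

Definition digit (p m i : nat) : nat := ((m %/ p ^ i) %% p)%N.

(* tau(m) = min { h : m < p^(1 + Phi h) }; for strictly increasing Phi and
   p >= 2 this minimum is <= m, so it suffices to search h in [0, m]. *)
Definition tau (p : nat) (Phi : nat -> nat) (m : nat) : nat :=
  find (fun h => (m < p ^ (1 + Phi h))%N) (iota 0 m.+1).

(* chi(Phi, m; x) = 1 iff |x - m|_p <= p^(-1 - Phi(tau m)) *)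
Definition chi (p : nat) (Phi : nat -> nat) (m : nat) (x : padic p) : bool :=
  zp_res x (1 + Phi (tau p Phi m))%N == zp_res (zp_of_nat p m) (1 + Phi (tau p Phi m))%N.

Definition Mfun (p : nat) (Phi : nat -> nat) (m : nat) : nat :=
  (\sum_(Phi (tau p Phi m).-1 + 1 <= i < Phi (tau p Phi m) + 1) digit p m i * p ^ i)%N.

Definition chi_term (p : nat) (Phi : nat -> nat) (B : nat -> padic p) (x : padic p)
  (m : nat) : padic p :=
  if chi Phi m x then B m else zp_zero p.

Definition Bformula (p : nat) (Phi : nat -> nat) (f : padic p -> padic p) (m : nat) : padic p :=
  if (m < p ^ (1 + Phi 0))%N then f (zp_of_nat p m)
  else zp_sub (f (zp_of_nat p m)) (f (zp_of_nat p (m - Mfun p Phi m))).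

(* Main.v *)
Require Import Defs.
From HB Require Import structures.
From mathcomp Require Import all_boot all_order all_algebra.
From mathcomp Require Import zify.
From Stdlib Require Import FunctionalExtensionality ProofIrrelevance.
Set Implicit Arguments. Unset Strict Implicit. Unset Printing Implicit Defensive.
Import Order.TTheory GRing.Theory Num.Theory.
Local Open Scope ring_scope.

Lemma zp_eq (p : nat) (x y : padic p) : (forall n, zp_res x n = zp_res y n) -> x = y.
Proof.
case: x y => fx cx [fy cy] /= H.
have E : fx = fy by apply: functional_extensionality.
subst fy; f_equal; apply: proof_irrelevance.
Qed.

Lemma zp_red (p : nat) (x : padic p) n : (zp_res x n %% (p ^ n)%N%:Z)%Z = zp_res x n.
Proof. by rewrite [in RHS](zp_coh x n) (zp_coh x n) modz_mod. Qed.

Lemma zp_add0 (p : nat) (x : padic p) : zp_add (zp_zero p) x = x.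
Proof. apply: zp_eq => n /=. by rewrite mod0z add0r zp_red. Qed.

Lemma zp_addr0 (p : nat) (x : padic p) : zp_add x (zp_zero p) = x.
Proof. apply: zp_eq => n /=. by rewrite mod0z addr0 zp_red. Qed.

Lemma zp_addsub (p : nat) (a b : padic p) : zp_add a (zp_sub b a) = b.
Proof. apply: zp_eq => n /=. by rewrite modzDmr addrC subrK zp_red. Qed.

Lemma zp_addK (p : nat) (a b c : padic p) : zp_add a b = zp_add a c -> b = c.
Proof.
move=> E; apply: zp_eq => n.
have := congr1 (fun z => zp_res z n) E => /= H.
rewrite -(zp_red b) -(zp_red c).
have -> : zp_res b n = (zp_res a n + zp_res b n) - zp_res a n by rewrite addrC addKr.
have -> : zp_res c n = (zp_res a n + zp_res c n) - zp_res a n by rewrite addrC addKr.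
by rewrite -modzDml H modzDml.
Qed.

Lemma zp_res_le (p : nat) (x : padic p) l d :
  zp_res x l = (zp_res x (l + d) %% (p ^ l)%N%:Z)%Z.
Proof.
elim: d => [|d IH]; first by rewrite addn0 zp_red.
rewrite IH (zp_coh x (l + d)) addnS modz_dvdm //.
by rewrite dvdzE /= expnD dvdn_mulr.
Qed.
Definition xn (p : nat) (x : padic p) (n : nat) : nat := `|zp_res x n|%N.

Lemma zp_res_xn (p : nat) (x : padic p) n : (0 < p)%N -> zp_res x n = (xn x n)%:Z.
Proof.
move=> p0; rewrite /xn gez0_abs // (zp_coh x n) modz_ge0 //.
rewrite eqz_nat expn_eq0; lia.
Qed.

Lemma xn_lt (p : nat) (x : padic p) n : (0 < p)%N -> (xn x n < p ^ n)%N.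
Proof.
move=> p0; rewrite -ltz_nat -zp_res_xn // (zp_coh x n) ltz_pmod //.
by rewrite ltz_nat expn_gt0 p0.
Qed.

Lemma zp_of_nat_xn (p : nat) m n : (0 < p)%N -> xn (zp_of_nat p m) n = (m %% p ^ n)%N.
Proof. by move=> p0; rewrite /xn /= modz_nat. Qed.

Lemma xn_le (p : nat) (x : padic p) l L : (0 < p)%N -> (l <= L)%N ->
  xn x l = (xn x L %% p ^ l)%N.
Proof.
move=> p0 /subnKC <-; set d := (L - l)%N.
apply/eqP; rewrite -eqz_nat -modz_nat -!zp_res_xn //.
by rewrite -zp_res_le.
Qed.

Lemma chiE (p : nat) Phi m (x : padic p) : (0 < p)%N ->
  (m < p ^ (1 + Phi (tau p Phi m)))%N ->
  chi Phi m x = (xn x (1 + Phi (tau p Phi m)) == m).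
Proof.
move=> p0 lt; rewrite /chi zp_res_xn // /= modz_nat modn_small //.
Qed.
Local Open Scope nat_scope.

Lemma Phi_mono (Phi : nat -> nat) : (forall a b, a < b -> Phi a < Phi b) ->
  forall a b, a <= b -> Phi a <= Phi b.
Proof.
move=> H a b; rewrite leq_eqVlt => /orP [/eqP -> //| /H]; exact: ltnW.
Qed.

Lemma Phi_ge (Phi : nat -> nat) : (forall a b, a < b -> Phi a < Phi b) ->
  forall n, n <= Phi n.
Proof.
move=> H; elim=> [//|n IH]; have := H n n.+1 (ltnSn n); lia.
Qed.

Lemma P_mono p (Phi : nat -> nat) : 1 < p -> (forall a b, a < b -> Phi a < Phi b) ->
  forall a b, a <= b -> p ^ (1 + Phi a) <= p ^ (1 + Phi b).
Proof.
move=> hp H a b ab; rewrite leq_pexp2l ?(ltnW hp) // leq_add2l; exact: Phi_mono.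
Qed.

Lemma tau_spec p (Phi : nat -> nat) m : 1 < p -> (forall a b, a < b -> Phi a < Phi b) ->
  [/\ tau p Phi m <= m, m < p ^ (1 + Phi (tau p Phi m)) &
      forall h, h < tau p Phi m -> p ^ (1 + Phi h) <= m].
Proof.
move=> hp H.
have hP : has (fun h => m < p ^ (1 + Phi h)) (iota 0 m.+1).
  apply/hasP; exists m; first by rewrite mem_iota; lia.
  apply: (leq_trans (ltn_expl m hp)); rewrite leq_pexp2l ?(ltnW hp) //.
  have := Phi_ge H m; lia.
have lt := hP; rewrite has_find size_iota in lt.
split => //.
- have := nth_find 0 hP; rewrite /tau nth_iota //.
- move=> h hlt; have := before_find 0 hlt; rewrite nth_iota ?add0n.
    by move/negbT; rewrite -leqNgt.
  by apply: ltn_trans lt.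
Qed.

Lemma tau_le p (Phi : nat -> nat) m h : 1 < p -> (forall a b, a < b -> Phi a < Phi b) ->
  m < p ^ (1 + Phi h) -> tau p Phi m <= h.
Proof.
move=> hp H lt; have [_ _ B] := tau_spec m hp H.
rewrite leqNgt; apply/negP => /B; rewrite leqNgt lt //.
Qed.

Lemma modn_digit p m a : m %% p ^ a.+1 = m %% p ^ a + digit p m a * p ^ a.
Proof.
rewrite /digit modn_divl -expnS.
set r := m %% p ^ a.+1.
have E : r %% p ^ a = m %% p ^ a.
  by rewrite /r modn_dvdm // expnS dvdn_mull.
by rewrite {1}(divn_eq r (p ^ a)) E addnC.
Qed.

Lemma sum_digits p m a : \sum_(0 <= i < a) digit p m i * p ^ i = m %% p ^ a.
Proof.
elim: a => [|a IH]; first by rewrite big_geq // expn0 modn1.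
by rewrite big_nat_recr //= IH modn_digit.
Qed.

Lemma Mfun_spec p (Phi : nat -> nat) m : 1 < p -> (forall a b, a < b -> Phi a < Phi b) ->
  0 < tau p Phi m ->
  m - Mfun p Phi m = m %% p ^ (1 + Phi (tau p Phi m).-1).
Proof.
move=> hp H t0; have [_ lt _] := tau_spec m hp H.
set t := tau p Phi m in t0 lt *.
have le : Phi t.-1 + 1 <= Phi t + 1.
  by rewrite leq_add2r; apply: Phi_mono => //; lia.
have := @big_cat_nat _ _ addn _ _ _ xpredT (fun i => digit p m i * p ^ i) (leq0n _) le.
rewrite !sum_digits -/(Mfun p Phi m) [Phi t + 1]addnC [Phi t.-1 + 1]addnC.
rewrite modn_small // => E.
by rewrite {1}E addnK.
Qed.

Definition Xs p (Phi : nat -> nat) (x : padic p) h := xn x (1 + Phi h).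

Lemma X_mod p (Phi : nat -> nat) (x : padic p) s h : 1 < p ->
  (forall a b, a < b -> Phi a < Phi b) -> s <= h ->
  Xs Phi x s = Xs Phi x h %% p ^ (1 + Phi s).
Proof.
move=> hp H sh; rewrite /Xs; apply: xn_le; first lia.
rewrite leq_add2l; exact: Phi_mono.
Qed.

Lemma X_lt p (Phi : nat -> nat) (x : padic p) h : 1 < p ->
  Xs Phi x h < p ^ (1 + Phi h).
Proof. move=> hp; apply: xn_lt; lia. Qed.

Lemma chi_iff p (Phi : nat -> nat) (x : padic p) m : 1 < p ->
  (forall a b, a < b -> Phi a < Phi b) ->
  chi Phi m x = (Xs Phi x (tau p Phi m) == m).
Proof.
move=> hp H; have [_ lt _] := tau_spec m hp H; rewrite chiE //; lia.
Qed.

Lemma chi_X p (Phi : nat -> nat) (x : padic p) h : 1 < p ->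
  (forall a b, a < b -> Phi a < Phi b) -> chi Phi (Xs Phi x h) x.
Proof.
move=> hp H; rewrite chi_iff //.
have sh := tau_le hp H (X_lt Phi x h hp).
have [_ lt _] := tau_spec (Xs Phi x h) hp H.
by rewrite (X_mod x hp H sh) modn_small.
Qed.

Lemma chi_ge p (Phi : nat -> nat) (x : padic p) h m : 1 < p ->
  (forall a b, a < b -> Phi a < Phi b) -> chi Phi m x -> Xs Phi x h <= m ->
  m %% p ^ (1 + Phi h) = Xs Phi x h.
Proof.
move=> hp H; rewrite chi_iff // => /eqP E le.
set s := tau p Phi m in E.
case: (leqP h s) => hs.
  by rewrite -E (X_mod x hp H hs).
have le2 : Xs Phi x s <= Xs Phi x h.
  by rewrite (X_mod x hp H (ltnW hs)) leq_mod.
have E2 : Xs Phi x h = m by lia.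
by rewrite -E2 modn_small // X_lt.
Qed.

Lemma C1 p (Phi : nat -> nat) (x : padic p) N m : 1 < p ->
  (forall a b, a < b -> Phi a < Phi b) -> chi Phi N x -> tau p Phi N = 0 ->
  m < N -> ~~ chi Phi m x.
Proof.
move=> hp H cN t0 mN; have [_ lt _] := tau_spec N hp H.
rewrite t0 in lt.
have tm : tau p Phi m <= 0 by apply: tau_le => //; lia.
move: cN; rewrite !chi_iff // t0; move: tm; rewrite leqn0 => /eqP ->.
move=> /eqP ->; rewrite neq_ltn mN orbT //.
Qed.

Lemma C2 p (Phi : nat -> nat) (x : padic p) N : 1 < p ->
  (forall a b, a < b -> Phi a < Phi b) -> chi Phi N x -> 0 < tau p Phi N ->
  [/\ Xs Phi x (tau p Phi N).-1 < N, chi Phi (Xs Phi x (tau p Phi N).-1) x,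
      forall m, Xs Phi x (tau p Phi N).-1 < m < N -> ~~ chi Phi m x &
      N - Mfun p Phi N = Xs Phi x (tau p Phi N).-1].
Proof.
move=> hp H cN t0; have [_ lt bef] := tau_spec N hp H.
move: (cN); rewrite chi_iff // => /eqP EN.
set t := tau p Phi N in t0 lt bef EN *.
have lt1 : Xs Phi x t.-1 < N.
  apply: (leq_trans (X_lt Phi x t.-1 hp)); apply: bef; lia.
split => //.
- exact: chi_X.
- move=> m /andP [am mN]; rewrite chi_iff //; apply/negP => /eqP Em.
  set s := tau p Phi m in Em.
  case: (leqP s t.-1) => st.
    have : Xs Phi x s <= Xs Phi x t.-1 by rewrite (X_mod x hp H st) leq_mod.
    lia.
  have : s <= t by apply: tau_le => //; lia.
  move=> ts; have st' : s = t by lia.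
  rewrite st' in Em; lia.
- rewrite Mfun_spec // -/t -{1}EN -X_mod //; lia.
Qed.

Lemma psum_inv p (Phi : nat -> nat) (f : padic p -> padic p) (x : padic p) N : 1 < p ->
  (forall a b, a < b -> Phi a < Phi b) ->
  ((forall m, m < N -> ~~ chi Phi m x) ->
     zp_psum (chi_term Phi (Bformula Phi f) x) N = zp_zero p) /\
  (forall a, a < N -> chi Phi a x -> (forall m, a < m < N -> ~~ chi Phi m x) ->
     zp_psum (chi_term Phi (Bformula Phi f) x) N = f (zp_of_nat p a)).
Proof.
move=> hp H; elim: N => [|N [IH1 IH2]].
  by split => // a.
split.
  move=> nc /=; rewrite /chi_term (negbTE (nc N (ltnSn N))) zp_addr0 IH1 //.
  by move=> m mN; apply: nc; lia.
move=> a aN ca gap /=; rewrite /chi_term.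
case: (ltngtP a N) => [lt|gt|eq]; first last.
- subst a; rewrite ca.
  have [_ lt bef] := tau_spec N hp H.
  case: (posnP (tau p Phi N)) => t0.
    rewrite IH1; last by move=> m; apply: C1.
    rewrite zp_add0 /Bformula; rewrite t0 in lt; by rewrite lt.
  have [a1 ca1 gap1 EM] := C2 hp H ca t0.
  rewrite (IH2 _ a1 ca1 gap1) /Bformula.
  have -> : (N < p ^ (1 + Phi 0)) = false.
    apply/negbTE; rewrite -leqNgt; apply: leq_trans (bef 0 t0) => //.
  by rewrite EM zp_addsub.
- lia.
- have nN : ~~ chi Phi N x by apply: gap; lia.
  rewrite (negbTE nN) zp_addr0; apply: IH2 => //.
  move=> m /andP [am mN]; apply: gap; lia.
Qed.

Lemma last_exists (P : nat -> bool) N b : b < N -> P b ->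
  exists a, [/\ b <= a, a < N, P a & forall m, a < m < N -> ~~ P m].
Proof.
elim: N => [//|N IH] bN Pb.
case PN: (P N).
  by exists N; split; [lia|lia|done|move=> m; lia].
have bN' : b < N by case: (ltngtP b N) bN => // E; [lia | rewrite E PN in Pb].
have [a [ba aN Pa gap]] := IH bN' Pb.
exists a; split => //; first lia.
move=> m /andP [am mN]; case: (ltngtP m N) => E; first (apply: gap; lia); lia || by rewrite E PN.
Qed.

Lemma psum_ext p (a b : nat -> padic p) N : (forall i, i < N -> a i = b i) ->
  zp_psum a N = zp_psum b N.
Proof.
elim: N => [//|N IH] E /=; rewrite IH ?E //; move=> i iN; apply: E; lia.
Qed.

Lemma existence p (Phi : nat -> nat) (f : padic p -> padic p) : 1 < p ->
  (forall a b, a < b -> Phi a < Phi b) -> zp_continuous f ->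
  forall x, zp_series_conv (chi_term Phi (Bformula Phi f) x) (f x).
Proof.
move=> hp H hf x k; have [l Hl] := hf x k.
exists (Xs Phi x l).+1 => N HN.
have [a [la aN ca gap]] := last_exists (P := fun m => chi Phi m x) HN (chi_X x l hp H).
have [_ E] := psum_inv f x N hp H; rewrite (E a aN ca gap).
apply: Hl; rewrite /zp_close !zp_res_xn; try lia.
rewrite zp_of_nat_xn; last lia.
have ll : l <= 1 + Phi l by have := Phi_ge H l; lia.
rewrite (xn_le x _ ll); last lia.
rewrite -/(Xs Phi x l) -(chi_ge hp H ca la) modn_dvdm //.
by rewrite dvdn_exp2l.
Qed.

Lemma sol_at p (Phi : nat -> nat) (f : padic p -> padic p) (B : nat -> padic p) m :
  1 < p -> (forall a b, a < b -> Phi a < Phi b) ->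
  (forall x, zp_series_conv (chi_term Phi B x) (f x)) ->
  zp_psum (chi_term Phi B (zp_of_nat p m)) m.+1 = f (zp_of_nat p m).
Proof.
move=> hp H hB; set x := zp_of_nat p m.
have nc : forall N, m < N -> ~~ chi Phi N x.
  move=> N mN; rewrite chi_iff //; apply/negP => /eqP E.
  move: E; rewrite /Xs /x zp_of_nat_xn; last lia.
  move=> E; have := leq_mod m (p ^ (1 + Phi (tau p Phi N))); rewrite E; lia.
have st : forall d, zp_psum (chi_term Phi B x) (m.+1 + d) = zp_psum (chi_term Phi B x) m.+1.
  elim=> [|d IH]; first by rewrite addn0.
  rewrite addnS.
  have nm : m < m.+1 + d by lia.
  have -> : zp_psum (chi_term Phi B x) (m.+1 + d).+1 =
    zp_add (zp_psum (chi_term Phi B x) (m.+1 + d)) (chi_term Phi B x (m.+1 + d)) by [].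
  rewrite IH; have -> : chi_term Phi B x (m.+1 + d) = zp_zero p.
    by rewrite /chi_term (negbTE (nc _ nm)).
  by rewrite zp_addr0.
apply: zp_eq => n; have [N0 HN] := hB x n.
have := HN (maxn N0 m.+1) (leq_maxl _ _); rewrite /zp_close.
have -> : maxn N0 m.+1 = m.+1 + (maxn N0 m.+1 - m.+1) by lia.
by rewrite st.
Qed.

Lemma sol_agree p (Phi : nat -> nat) (f : padic p -> padic p) (B1 B2 : nat -> padic p) :
  1 < p -> (forall a b, a < b -> Phi a < Phi b) ->
  (forall x, zp_series_conv (chi_term Phi B1 x) (f x)) ->
  (forall x, zp_series_conv (chi_term Phi B2 x) (f x)) ->
  forall m, B1 m = B2 m.
Proof.
move=> hp H h1 h2.
suff : forall n i, i < n -> B1 i = B2 i by move=> S m; apply: (S m.+1).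
elim=> [//|n IH] i iN.
case: (ltngtP i n) iN => [lt _|gt|->] ; [exact: IH | lia | move=> _].
have E1 := sol_at n hp H h1; have E2 := sol_at n hp H h2.
have ch : chi Phi n (zp_of_nat p n).
  rewrite chi_iff // /Xs zp_of_nat_xn; last lia.
  have [_ lt _] := tau_spec n hp H; by rewrite modn_small.
move: E1 E2 => /= E1 E2.
rewrite (@psum_ext _ _ (chi_term Phi B2 (zp_of_nat p n))) in E1; last first.
  by move=> j jn; rewrite /chi_term IH.
rewrite -E2 in E1; move/zp_addK: E1; by rewrite /chi_term ch.
Qed.

Theorem proposition1 (p : nat) (Phi : nat -> nat) (f : padic p -> padic p) :
  prime p ->
  (forall a b : nat, (a < b)%N -> (Phi a < Phi b)%N) ->
  zp_continuous f ->
  (exists! B : nat -> padic p,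
      forall x : padic p, zp_series_conv (chi_term Phi B x) (f x)) /\
  (forall B : nat -> padic p,
      (forall x : padic p, zp_series_conv (chi_term Phi B x) (f x)) ->
      forall m : nat, B m = Bformula Phi f m).
Proof.
move=> pp H hf; have hp : 1 < p by apply: prime_gt1.
have ex := existence hp H hf.
split.
  exists (Bformula Phi f); split => // B hB.
  apply: functional_extensionality => m; exact: sol_agree ex hB m.
move=> B hB m; exact: sol_agree hB ex m.
Qed.
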